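(* Let $X$ be a finite set with similarity function $S$, and suppose the target clustering $\mathcal{C}^{\ast}$ satisfies stability with respect to $S$. Let $C_i,C_j$ be disjoint nonempty subsets of $X$ such that some target cluster meets both $C_i$ and $C_j$. If the unrestricted merge procedure (described below) applied to $C_i,C_j$ outputs the single cluster $C_i\cup C_j$, then there is a target cluster $C^{\ast}_l$ with $C_i\subseteq C^{\ast}_l$ and $C_j\subseteq C^{\ast}_l$.
   Context: For nonempty $A,A'\subseteq X$, $S(A,A')$ is the average of $S(x,y)$ over $x\in A,y\in A'$. $\mathcal{C}^{\ast}=\{C^{\ast}_1,\dots,C^{\ast}_k\}$ satisfies stability w.r.t. $S$ if for all $i\neq j$, every nonempty proper $A\subset C^{\ast}_i$ and nonempty $A'\subseteq C^{\ast}_j$: $S(A,C^{\ast}_i\setminus A)>S(A,A')$. Average-linkage tree $T_{glob}$ of $X$: leaves are singletons; repeatedly merge the two current nodes $N_1,N_2$ with largest $S(N_1,N_2)$ (ties arbitrary) into parent $N_1\cup N_2$ until the root $X$ remains. Split$(Y)$ for $|Y|\ge2$: let $N$ be the deepest node of $T_{glob}$ containing $Y$, with children $N_1,N_2$; output $Y\cap N_1$, $Y\cap N_2$. Unrestricted merge procedure on $C_i,C_j$: let $C'_i,C'_j$ be the output of Split$(C_i\cup C_j)$; if $\{C'_i,C'_j\}=\{C_i,C_j\}$ output the single cluster $C_i\cup C_j$, otherwise output the two clusters $C'_i,C'_j$. *)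

(* Defs.v *)
From mathcomp Require Import all_boot all_order all_algebra.
Set Implicit Arguments. Unset Strict Implicit. Unset Printing Implicit Defensive.
Import Order.TTheory GRing.Theory Num.Theory.
Local Open Scope ring_scope.

Section Clustering.
Variables (R : realFieldType) (T : finType) (S : T -> T -> R).

Definition S_avg (A B : {set T}) : R :=
  (\sum_(x in A) \sum_(y in B) S x y) / (#|A| * #|B|)%:R.

Definition stable (P : {set {set T}}) : Prop :=
  forall Ci Cj, Ci \in P -> Cj \in P -> Ci != Cj ->
  forall A A' : {set T}, A != set0 -> A \proper Ci ->
    A' != set0 -> A' \subset Cj ->
    S_avg A A' < S_avg A (Ci :\: A).

Definition merge_nodes (P : {set {set T}}) (N1 N2 : {set T}) : {set {set T}} :=
  (N1 :|: N2) |: ((P :\ N1) :\ N2).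

(* A valid run of average linkage from the current nodes P: the sequence of
   merges (N1, N2) performed, each merging two distinct current nodes of
   maximal average similarity (ties arbitrary), ending with the root X. *)
Fixpoint avg_linkage_from (P : {set {set T}}) (ms : seq ({set T} * {set T}))
    : Prop :=
  match ms with
  | [::] => P = [set [set: T]]
  | (N1, N2) :: ms' =>
      [/\ N1 \in P, N2 \in P, N1 != N2,
          (forall M1 M2, M1 \in P -> M2 \in P -> M1 != M2 ->
             S_avg M1 M2 <= S_avg N1 N2)
        & avg_linkage_from (merge_nodes P N1 N2) ms']
  end.

(* ms is the merge sequence of an average-linkage tree T_glob of X:
   leaves are singletons; internal node N1 :|: N2 has children N1, N2
   for each (N1, N2) in ms. *)
Definition avg_linkage (ms : seq ({set T} * {set T})) : Prop :=
  avg_linkage_from [set [set x] | x : T] ms.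

(* Split(Y) = (A, B) in the tree given by ms: for |Y| >= 2, the deepest node
   containing Y is the (inclusion-)smallest internal node N1 :|: N2 containing
   Y, and the output is (Y :&: N1, Y :&: N2). *)
Definition split_out (ms : seq ({set T} * {set T})) (Y A B : {set T}) : Prop :=
  (1 < #|Y|)%N /\
  exists N1 N2 : {set T},
    [/\ (N1, N2) \in ms, Y \subset N1 :|: N2,
        (forall M1 M2, (M1, M2) \in ms -> Y \subset M1 :|: M2 ->
           N1 :|: N2 \subset M1 :|: M2),
        A = Y :&: N1 & B = Y :&: N2].

End Clustering.

(* Main.v *)
Require Import Defs.
From mathcomp Require Import all_boot all_order all_algebra.
Set Implicit Arguments. Unset Strict Implicit.
Import Order.TTheory GRing.Theory Num.Theory.
Local Open Scope ring_scope.

Definition Gs (R : realFieldType) (T : finType) (S : T -> T -> R) (c : R)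
  (A B : {set T}) : R := \sum_(y in B) \sum_(x in A) (S x y - c).

Lemma Gs_avg (R : realFieldType) (T : finType) (S : T -> T -> R) c (A B : {set T}) :
  A != set0 -> B != set0 ->
  Gs S c A B = (S_avg S A B - c) * (#|A| * #|B|)%:R.
Proof.
move=> hA hB.
have hn : (#|A| * #|B|)%:R != 0 :> R.
  by rewrite pnatr_eq0 -lt0n muln_gt0 !card_gt0 hA hB.
rewrite /Gs /S_avg mulrBl divfK // exchange_big /=.
under eq_bigr do rewrite sumrB sumr_const.
rewrite sumrB sumr_const; congr (_ - _).
by rewrite -mulrnA mulr_natr mulnC.
Qed.

Lemma Gs_lt0 (R : realFieldType) (T : finType) (S : T -> T -> R) c (A B : {set T}) :
  A != set0 -> B != set0 -> (Gs S c A B < 0) = (S_avg S A B < c).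
Proof.
move=> hA hB; rewrite Gs_avg // pmulr_llt0 ?subr_lt0 //.
by rewrite ltr0n muln_gt0 !card_gt0 hA hB.
Qed.

Lemma Gs_le0 (R : realFieldType) (T : finType) (S : T -> T -> R) c (A B : {set T}) :
  A != set0 -> B != set0 -> (Gs S c A B <= 0) = (S_avg S A B <= c).
Proof.
move=> hA hB; rewrite Gs_avg // pmulr_lle0 ?subr_le0 //.
by rewrite ltr0n muln_gt0 !card_gt0 hA hB.
Qed.

Lemma Gs0 (R : realFieldType) (T : finType) (S : T -> T -> R) c (A : {set T}) :
  Gs S c A set0 = 0.
Proof. by rewrite /Gs big_set0. Qed.

Lemma sum_decomp (R : realFieldType) (T : finType) (Q : {set {set T}})
  (B : {set T}) (g : T -> R) :
  trivIset Q -> B \subset cover Q ->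
  \sum_(y in B) g y = \sum_(M in Q) \sum_(y in M :&: B) g y.
Proof.
move=> htr hB.
have -> : \sum_(y in B) g y = \sum_(y in cover Q) (if y \in B then g y else 0).
  rewrite big_mkcond [RHS]big_mkcond; apply: eq_bigr => y _.
  case: (boolP (y \in B)) => hy; first by rewrite (subsetP hB y hy).
  by case: (y \in cover Q).
rewrite (big_trivIset _ htr).
change (\sum_(A in Q) \sum_(x in A) (if x \in B then g x else 0) = \sum_(M in Q) \sum_(y in M :&: B) g y).
apply: eq_bigr => M _.
by rewrite -big_mkcondr; apply: eq_bigl => y; rewrite inE.
Qed.

Lemma Gs_decomp (R : realFieldType) (T : finType) (S : T -> T -> R) c
  (Q : {set {set T}}) (A B : {set T}) :
  trivIset Q -> B \subset cover Q ->
  Gs S c A B = \sum_(M in Q) Gs S c A (M :&: B).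
Proof. by move=> htr hB; rewrite /Gs (sum_decomp _ htr hB). Qed.

Lemma S_avg_sym (R : realFieldType) (T : finType) (S : T -> T -> R)
  (S_sym : forall x y, S x y = S y x) (A B : {set T}) :
  S_avg S A B = S_avg S B A.
Proof.
rewrite /S_avg exchange_big /= mulnC; congr (_ / _).
by apply: eq_bigr => x _; apply: eq_bigr => y _; rewrite S_sym.
Qed.

Definition base (T : finType) (Q : {set {set T}}) : Prop :=
  [/\ forall x, exists2 M, M \in Q & x \in M,
      forall M1 M2 x, M1 \in Q -> M2 \in Q -> x \in M1 -> x \in M2 -> M1 = M2
    & forall M, M \in Q -> M != set0].

Definition utype (T : finType) (P : {set {set T}}) (N : {set T}) : Prop :=
  forall D, D \in P -> N :&: D != set0 -> D \subset N.

Definition lam (T : finType) (P : {set {set T}}) (N : {set T}) : Prop :=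
  (exists2 D, D \in P & N \subset D) \/ utype P N.

Definition inv (T : finType) (P Q : {set {set T}}) : Prop :=
  base Q /\ forall M, M \in Q -> lam P M.

Lemma base_triv (T : finType) (Q : {set {set T}}) : base Q -> trivIset Q.
Proof.
case=> _ hd _; apply/trivIsetP => A B hA hB hAB.
rewrite disjoints_subset; apply/subsetP => z hz; rewrite inE; apply/negP => hz2.
by move/eqP: hAB; apply; apply: (hd _ _ z).
Qed.

Lemma base_cover (T : finType) (Q : {set {set T}}) (B : {set T}) :
  base Q -> B \subset cover Q.
Proof.
case=> hc _ _; apply/subsetP => z _; case: (hc z) => M hM hz.
by apply/bigcupP; exists M.
Qed.

Lemma base_partition (T : finType) (P : {set {set T}}) :
  partition P [set: T] -> base P.
Proof.
case/and3P => hc htr h0; split.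
- move=> x; have : x \in cover P by rewrite (eqP hc) inE.
  by case/bigcupP => D hD hx; exists D.
- move=> D1 D2 x h1 h2 hx1 hx2; apply/eqP; apply/negP => hne.
  have := trivIsetP htr _ _ h1 h2 (introN eqP (fun e => hne (introT eqP e))).
  by move/disjointFr => /(_ x hx1); rewrite hx2.
- by move=> M hM; apply/eqP => hM0; rewrite -hM0 hM in h0.
Qed.

Lemma avg_contra (R : realFieldType) (T : finType) (S : T -> T -> R)
  (P Q : {set {set T}}) (C N1 N2 : {set T}) :
  base P -> stable S P -> inv P Q ->
  C \in P -> N1 \in Q -> N1 \subset C -> ~~ (C \subset N1) ->
  N2 \in Q -> N2 :&: C = set0 ->
  (forall M, M \in Q -> M != N1 -> S_avg S N1 M <= S_avg S N1 N2) -> False.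
Proof.
move=> bP stab [bQ lQ] CP N1Q N1C CN1 N2Q N2C hmax.
have bP' := bP; have bQ' := bQ.
case: bP' => Pcov Pdisj Pne; case: bQ' => Qcov Qdisj Qne.
have N1ne := Qne _ N1Q; have N2ne := Qne _ N2Q.
set B := C :\: N1.
have Bne : B != set0 by rewrite /B setD_eq0.
set s := S_avg S N1 N2; set t := S_avg S N1 B.
have hts : t <= s.
  rewrite -(Gs_le0 S s N1ne Bne) (Gs_decomp S s N1 (base_triv bQ) (base_cover B bQ)).
  apply: sumr_le0 => M MQ.
  case: (M :&: B =P set0) => [->|/eqP hne]; first by rewrite Gs0.
  case/set0Pn: (hne) => x; rewrite !inE => /and3P [xM xN1 xC].
  have hMN : forall z, z \in M -> z \in N1 -> False.
    move=> z zM zN1; have eMN := Qdisj _ _ _ MQ N1Q zM zN1.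
    by rewrite -eMN xM in xN1.
  have MB : M \subset B.
    case: (lQ _ MQ) => [[D DP MD] | hu].
    - have eDC := Pdisj _ _ _ DP CP (subsetP MD x xM) xC.
      apply/subsetP => z zM; rewrite !inE -eDC (subsetP MD z zM) andbT.
      by apply/negP => zN1; apply: (hMN z).
    - have : C \subset M.
        apply: hu => //; apply/set0Pn; exists x; by rewrite inE xM xC.
      move=> CM; case/set0Pn: N1ne => w wN1.
      by exfalso; apply: (hMN w) => //; apply: (subsetP CM); apply: (subsetP N1C).
  have Mne := Qne _ MQ.
  rewrite (setIidPl MB) (Gs_le0 S s N1ne Mne); apply: hmax => //.
  by apply/eqP => eM; rewrite eM in xM; rewrite xM in xN1.
have hst : s < t.
  rewrite -(Gs_lt0 S t N1ne N2ne) (Gs_decomp S t N1 (base_triv bP) (base_cover N2 bP)).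
  have key : forall D, D \in P -> D :&: N2 != set0 -> Gs S t N1 (D :&: N2) < 0.
    move=> D DP hne; rewrite (Gs_lt0 S t N1ne hne).
    have CD : C != D.
      apply/eqP => eCD; case/set0Pn: hne => y; rewrite inE => /andP [yD yN2].
      have : y \in N2 :&: C by rewrite inE yN2 eCD.
      by rewrite N2C inE.
    have pN1 : N1 \proper C by rewrite properE N1C.
    exact: (stab C D CP DP CD N1 (D :&: N2) N1ne pN1 hne (subsetIl _ _)).
  case/set0Pn: N2ne => y yN2; case: (Pcov y) => D0 D0P yD0.
  have hne0 : D0 :&: N2 != set0 by apply/set0Pn; exists y; rewrite inE yD0.
  rewrite (bigD1 D0) //=; apply: le_lt_trans (key D0 D0P hne0); rewrite gerDl.
  apply: sumr_le0 => D /andP [DP _].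
  case: (D :&: N2 =P set0) => [->|/eqP hne]; first by rewrite Gs0.
  exact: ltW (key D DP hne).
by have := lt_le_trans hst hts; rewrite ltxx.
Qed.

Lemma lam_merge1 (R : realFieldType) (T : finType) (S : T -> T -> R)
  (P Q : {set {set T}}) (C N1 N2 : {set T}) :
  base P -> stable S P -> inv P Q ->
  C \in P -> N1 \in Q -> N1 \subset C -> ~~ (C \subset N1) ->
  N2 \in Q -> N1 != N2 ->
  (forall M, M \in Q -> M != N1 -> S_avg S N1 M <= S_avg S N1 N2) ->
  lam P (N1 :|: N2).
Proof.
move=> bP stab iQ CP N1Q N1C CN1 N2Q N12 hmax.
case: (N2 :&: C =P set0) => [h|/eqP h].
  by exfalso; apply: (avg_contra bP stab iQ CP N1Q N1C CN1 N2Q h hmax).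
have bP' := bP; case: bP' => Pcov Pdisj Pne.
case: (iQ) => [[Qcov Qdisj Qne] lQ].
case/set0Pn: (h) => y; rewrite inE => /andP [yN2 yC].
case: (lQ _ N2Q) => [[D DP N2D] | hu].
- have eDC := Pdisj _ _ _ DP CP (subsetP N2D y yN2) yC.
  by left; exists C => //; rewrite subUset N1C -eDC N2D.
- have CN2 := hu _ CP h.
  case/set0Pn: (Qne _ N1Q) => w wN1.
  have wN2 : w \in N2 by apply: (subsetP CN2); apply: (subsetP N1C).
  by rewrite (Qdisj _ _ _ N1Q N2Q wN1 wN2) eqxx in N12.
Qed.

Lemma lam_cases (T : finType) (P : {set {set T}}) (N : {set T}) :
  base P -> lam P N ->
  utype P N \/ exists2 C, C \in P & (N \subset C) && ~~ (C \subset N).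
Proof.
move=> [Pcov Pdisj Pne] [[D DP ND] | hu]; last by left.
case: (boolP (D \subset N)) => hDN; last by right; exists D => //; rewrite ND.
left => D' D'P /set0Pn [z]; rewrite inE => /andP [zN zD'].
by rewrite (Pdisj _ _ _ D'P DP zD' (subsetP ND z zN)).
Qed.

Lemma utype_union (T : finType) (P : {set {set T}}) (N1 N2 : {set T}) :
  utype P N1 -> utype P N2 -> utype P (N1 :|: N2).
Proof.
move=> h1 h2 D DP /set0Pn [z]; rewrite !inE => /andP [/orP [zN|zN] zD].
- apply: subset_trans (subsetUl _ _); apply: h1 => //.
  by apply/set0Pn; exists z; rewrite inE zN.
- apply: subset_trans (subsetUr _ _); apply: h2 => //.
  by apply/set0Pn; exists z; rewrite inE zN.
Qed.

Lemma inv_merge (R : realFieldType) (T : finType) (S : T -> T -> R)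
  (S_sym : forall x y, S x y = S y x)
  (P Q : {set {set T}}) (N1 N2 : {set T}) :
  base P -> stable S P -> inv P Q -> N1 \in Q -> N2 \in Q -> N1 != N2 ->
  (forall M1 M2, M1 \in Q -> M2 \in Q -> M1 != M2 ->
     S_avg S M1 M2 <= S_avg S N1 N2) ->
  inv P (merge_nodes Q N1 N2).
Proof.
move=> bP stab iQ N1Q N2Q N12 hmax.
case: (iQ) => [[Qcov Qdisj Qne] lQ].
have memE : forall M, (M \in merge_nodes Q N1 N2) =
   (M == N1 :|: N2) || [&& M != N2, M != N1 & M \in Q].
  by move=> M; rewrite /merge_nodes in_setU1 !in_setD1.
have lamU : lam P (N1 :|: N2).
  case: (lam_cases bP (lQ _ N1Q)) => [h1|[C CP /andP [N1C CN1]]]; last first.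
    apply: (lam_merge1 bP stab iQ CP N1Q N1C CN1 N2Q N12) => M MQ MN1.
    by apply: hmax; rewrite // eq_sym.
  case: (lam_cases bP (lQ _ N2Q)) => [h2|[C CP /andP [N2C CN2]]].
    by right; apply: utype_union.
  rewrite setUC; apply: (lam_merge1 bP stab iQ CP N2Q N2C CN2 N1Q _) => //.
    by rewrite eq_sym.
  move=> M MQ MN2; rewrite (S_avg_sym S_sym N2 N1); by apply: hmax; rewrite // eq_sym.
split; first split.
- move=> x; case: (Qcov x) => M MQ xM.
  case: (boolP ((M == N1) || (M == N2))) => hM.
    exists (N1 :|: N2); first by rewrite memE eqxx.
    by case/orP: hM => /eqP <-; rewrite inE xM ?orbT.
  exists M => //; rewrite memE; move: hM; rewrite negb_or => /andP [-> ->].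
  by rewrite MQ orbT.
- move=> M1 M2 x; rewrite !memE.
  case/orP => [/eqP -> | /and3P [h12 h11 h1Q]];
  case/orP => [/eqP -> | /and3P [h22 h21 h2Q]] //.
  + rewrite inE => /orP [xN|xN] xM2.
    * by rewrite (Qdisj _ _ _ N1Q h2Q xN xM2) eqxx in h21.
    * by rewrite (Qdisj _ _ _ N2Q h2Q xN xM2) eqxx in h22.
  + move=> xM1; rewrite inE => /orP [xN|xN].
    * by rewrite (Qdisj _ _ _ N1Q h1Q xN xM1) eqxx in h11.
    * by rewrite (Qdisj _ _ _ N2Q h1Q xN xM1) eqxx in h12.
  + exact: Qdisj.
- move=> M; rewrite memE => /orP [/eqP -> | /and3P [_ _ MQ]]; last exact: Qne.
  case/set0Pn: (Qne _ N1Q) => w wN1; apply/set0Pn; exists w.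
  by rewrite inE wN1.
- move=> M; rewrite memE => /orP [/eqP -> | /and3P [_ _ MQ]] //; exact: lQ.
Qed.

Lemma run_lam (R : realFieldType) (T : finType) (S : T -> T -> R)
  (S_sym : forall x y, S x y = S y x) (P : {set {set T}})
  (ms : seq ({set T} * {set T})) :
  base P -> stable S P -> forall Q, avg_linkage_from S Q ms -> inv P Q ->
  forall N1 N2, (N1, N2) \in ms ->
  [/\ lam P N1, lam P N2 & forall x, x \in N1 -> x \in N2 -> False].
Proof.
move=> bP stab; elim: ms => [|[N1 N2] ms IH] Q //=.
move=> [h1 h2 hne hmax hrest] iQ M1 M2; rewrite in_cons => /orP [/eqP [-> ->] | hin].
- case: (iQ) => [[_ Qdisj _] lQ]; split; [exact: lQ | exact: lQ |].
  by move=> x x1 x2; rewrite (Qdisj _ _ _ h1 h2 x1 x2) eqxx in hne.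
- exact: (IH _ hrest (inv_merge S_sym bP stab iQ h1 h2 hne hmax)).
Qed.

Lemma inv0 (T : finType) (P : {set {set T}}) :
  base P -> inv P [set [set x] | x : T].
Proof.
move=> [Pcov Pdisj Pne]; split; first split.
- by move=> x; exists [set x]; [apply: imset_f | rewrite set11].
- move=> M1 M2 x /imsetP [a _ ->] /imsetP [b _ ->].
  by rewrite !inE => /eqP <- /eqP <-.
- by move=> M /imsetP [a _ ->]; apply/set0Pn; exists a; rewrite set11.
- move=> M /imsetP [a _ ->]; left; case: (Pcov a) => D DP aD.
  by exists D; rewrite // sub1set.
Qed.

Lemma lam_in (T : finType) (P : {set {set T}}) (C N1 N2 : {set T}) :
  base P -> C \in P -> lam P N1 -> C :&: N1 != set0 -> C :&: N2 != set0 ->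
  (forall x, x \in N1 -> x \in N2 -> False) -> N1 \subset C.
Proof.
move=> [Pcov Pdisj Pne] CP [[D DP N1D] | hu] h1 h2 hd.
- case/set0Pn: h1 => z; rewrite inE => /andP [zC zN1].
  have eDC := Pdisj _ _ _ DP CP (subsetP N1D z zN1) zC.
  by rewrite -eDC.
- have CN1 : C \subset N1 by apply: hu => //; rewrite setIC.
  case/set0Pn: h2 => z; rewrite inE => /andP [zC zN2].
  by exfalso; apply: (hd z) => //; apply: (subsetP CN1).
Qed.

Theorem lemma21 (R : realFieldType) (T : finType) (S : T -> T -> R)
  (S_sym : forall x y, S x y = S y x)
  (P : {set {set T}}) (P_part : partition P [set: T])
  (P_stable : stable S P)
  (ms : seq ({set T} * {set T})) (Tglob : avg_linkage S ms)
  (Ci Cj : {set T}) (Ci_ne : Ci != set0) (Cj_ne : Cj != set0)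
  (disj : [disjoint Ci & Cj])
  (meet : exists2 C, C \in P & (C :&: Ci != set0) && (C :&: Cj != set0))
  (Ci' Cj' : {set T}) (hsplit : split_out ms (Ci :|: Cj) Ci' Cj')
  (hsingle : [set Ci'; Cj'] = [set Ci; Cj]) :
  exists2 Cl, Cl \in P & (Ci \subset Cl) && (Cj \subset Cl).
Proof.
have bP := base_partition P_part.
case: hsplit => _ [N1 [N2 [hin hY _ hCi' hCj']]].
have [l1 l2 d12] := run_lam S_sym bP P_stable Tglob (inv0 bP) hin.
case: meet => C CP /andP [hCi hCj].
have meetsC : forall Z, Z \in [set Ci'; Cj'] -> C :&: Z != set0.
  by move=> Z; rewrite hsingle !inE => /orP [/eqP -> | /eqP ->].
have mC1 : C :&: N1 != set0.
  case/set0Pn: (meetsC _ (set21 Ci' Cj')) => z; rewrite hCi' !inE.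
  by case/and3P => zC _ zN; apply/set0Pn; exists z; rewrite inE zC zN.
have mC2 : C :&: N2 != set0.
  case/set0Pn: (meetsC _ (set22 Ci' Cj')) => z; rewrite hCj' !inE.
  by case/and3P => zC _ zN; apply/set0Pn; exists z; rewrite inE zC zN.
have N1C := lam_in bP CP l1 mC1 mC2 d12.
have N2C := lam_in bP CP l2 mC2 mC1 (fun x a b => d12 x b a).
have YC : Ci :|: Cj \subset C by apply: subset_trans hY _; rewrite subUset N1C N2C.
exists C => //; apply/andP; split; apply: subset_trans YC.
- exact: subsetUl.
- exact: subsetUr.
Qed.
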